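(* For any infinite subset $A$ of an almost Clifford semigroup $S$, the set $AA=\{xy:x,y\in A\}$ is infinite.
   Context: The Clifford part $H(S)$ of a semigroup $S$ is the union of all subgroups of $S$; $S$ is almost Clifford if $S\setminus H(S)$ is finite. *)

(* Defs.v *)
From mathcomp Require Import all_boot.
From mathcomp Require Import boolp classical_sets cardinality.
Set Implicit Arguments. Unset Strict Implicit. Unset Printing Implicit Defensive.
Local Open Scope classical_set_scope.

(* A semigroup is a carrier T with an associative operation op (the
   associativity hypothesis is a binder of the theorem). *)

Definition is_subgroup (T : Type) (op : T -> T -> T) (G : set T) : Prop :=
  exists e : T,
    G e /\
    (forall x y, G x -> G y -> G (op x y)) /\
    (forall x, G x -> op e x = x /\ op x e = x) /\
    (forall x, G x -> exists y, G y /\ op x y = e /\ op y x = e).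

Definition clifford_part (T : Type) (op : T -> T -> T) : set T :=
  [set x | exists G : set T, is_subgroup op G /\ G x].

Definition almost_clifford (T : Type) (op : T -> T -> T) : Prop :=
  finite_set (~` clifford_part op).

Definition setprod (T : Type) (op : T -> T -> T) (A : set T) : set T :=
  [set z | exists x y, A x /\ A y /\ z = op x y].

(* Main.v *)
Require Import Defs.
From mathcomp Require Import all_boot.
From mathcomp Require Import boolp classical_sets cardinality.
Local Open Scope classical_set_scope.

Lemma same_idem (T : Type) (op : T -> T -> T)
  (op_assoc : forall x y z, op x (op y z) = op (op x y) z)
  (G H : set T) (e f s : T) :
  G e -> (forall x, G x -> op e x = x /\ op x e = x) ->
  (forall x, G x -> exists y, G y /\ op x y = e /\ op y x = e) ->
  H f -> (forall x, H x -> op f x = x /\ op x f = x) ->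
  (forall x, H x -> exists y, H y /\ op x y = f /\ op y x = f) ->
  G s -> H s -> e = f.
Proof.
move=> Ge Gid Ginv Hf Hid Hinv Gs Hs.
have [s' [_ [ss' s's]]] := Ginv s Gs.
have [t [_ [st ts]]] := Hinv s Hs.
have fe : op f e = e by rewrite -ss' op_assoc (proj1 (Hid s Hs)).
have fe2 : op f e = f.
  by rewrite -ts -op_assoc (proj2 (Gid s Gs)).
by rewrite -fe fe2.
Qed.

Theorem mainTheorem20 (T : Type) (op : T -> T -> T)
  (op_assoc : forall x y z, op x (op y z) = op (op x y) z)
  (hS : almost_clifford op) (A : set T) (hA : infinite_set A) :
  infinite_set (setprod op A).
Proof.
move=> finAA.
pose B := A `&` clifford_part op.
have infB : infinite_set B.
  move=> finB; apply: hA; apply: (sub_finite_set (B := B `|` ~` clifford_part op)).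
    move=> x Ax; case: (pselect (clifford_part op x)) => h; [left|right] => //.
  by rewrite finite_setU.
have sqsub : (fun x => op x x) @` B `<=` setprod op A.
  by move=> _ [x [Ax _] <-]; exists x, x.
have finsq := sub_finite_set sqsub finAA.
have : exists s, infinite_set (B `&` (fun x => op x x) @^-1` [set s]).
  apply: contrapT => hn; apply: infB.
  apply: (sub_finite_set (B := \bigcup_(s in (fun x => op x x) @` B)
     (B `&` (fun x => op x x) @^-1` [set s]))).
    by move=> x Bx; exists (op x x) => //; exists x.
  apply: bigcup_finite => // s _.
  by apply: contrapT => h; apply: hn; exists s.
case=> s infX.
have [x0 [[Ax0 [G0 [[e [Ge [Gcl [Gid Ginv]]]] Gx0]]] sq0]] := infinite_setN0 infX.
have [x0' [Gx0' [x0x0' x0'x0]]] := Ginv x0 Gx0.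
apply: infX.
apply: (sub_finite_set (B := (op x0') @` ((op x0) @` (B `&` (fun x => op x x) @^-1` [set s])))).
  move=> y [[Ay [H [[f [Hf [Hcl [Hid Hinv]]]] Hy]]] sqy].
  exists (op x0 y); first by exists y => //; split => //; split => //; exists H; split => //; exists f.
  have ef : e = f.
    apply: (@same_idem T op op_assoc G0 H e f s Ge Gid Ginv Hf Hid Hinv).
      by rewrite -sq0; apply: Gcl.
    by rewrite -sqy; apply: Hcl.
  rewrite op_assoc x0'x0 ef; exact: (proj1 (Hid y Hy)).
apply: finite_image; apply: (sub_finite_set _ finAA).
by move=> _ [y [[Ay _] _] <-]; exists x0, y.
Qed.
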